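(* The map $\psi$ is a homogeneous $(n-1)$-cocycle on $GL_n(\mathbb{C})$: for all $A,A_0,\dots,A_n\in GL_n(\mathbb{C})$, every $n$-tuple $\mathfrak{A}=(A_1,\dots,A_n)$ of elements of $GL_n(\mathbb{C})$, every homogeneous polynomial $P$ and every row vector $x\in\mathbb{C}^n$, $$\psi(A\mathfrak{A})(P,x)=\det(A)\,\psi(\mathfrak{A})(A^TP,xA)\qquad\text{and}\qquad \sum_{i=0}^n(-1)^i\psi(A_0,\dots,\widehat{A_i},\dots,A_n)(P,x)=0 .$$ Consequently $\psi$ defines a class in $H^{n-1}(GL_n(\mathbb{C}),S_0)$, where $S_0$ is the space of functions $H\times\mathbb{C}^n\to\mathbb{C}$ ($H$ the homogeneous polynomials of a fixed degree) with $GL_n(\mathbb{C})$-action $(A\phi)(P,x)=\det(A)\phi(A^TP,xA)$.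
   Context: Notation: $\langle x,v\rangle=\sum_ix_iv_i$ for a row vector $x$ and column vector $v$. For $\sigma\in M_n(\mathbb{C})$ with columns $\sigma_1,\dots,\sigma_n$: $f(\sigma)(x)=\det(\sigma)/\prod_j\langle x,\sigma_j\rangle$ if all $\langle x,\sigma_j\rangle\neq0$ and $0$ otherwise; $f(\sigma)(P,x)=P(-\partial_{x_1},\dots,-\partial_{x_n})f(\sigma)(x)$ (computed where all $\langle x,\sigma_j\rangle\ne0$, and $0$ elsewhere). $(A^TP)(y)=P(yA^T)$. For an $n$-tuple $\mathfrak{A}=(A_1,\dots,A_n)$ of matrices in $GL_n(\mathbb{C})$, write $A_{kj}$ for the $j$-th column of $A_k$; for $x\ne0$ let $j_k$ be the smallest index with $\langle x,A_{kj_k}\rangle\neq0$, and set $\psi(\mathfrak{A})(P,x)=f(A_{1j_1},\dots,A_{nj_n})(P,x)$; set $\psi(\mathfrak{A})(P,0)=0$. For $A\in GL_n(\mathbb{C})$, $A\mathfrak{A}=(AA_1,\dots,AA_n)$. *)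

(* Defs.v *)
From HB Require Import structures.
From mathcomp Require Import all_boot all_order all_algebra.
Set Implicit Arguments. Unset Strict Implicit. Unset Printing Implicit Defensive.
Import Order.TTheory GRing.Theory Num.Theory.
Local Open Scope ring_scope.

Section Defs.
Variables (C : numClosedFieldType) (n : nat).

Definition pair (x : 'rV[C]_n) (v : 'cV[C]_n) : C := (x *m v) 0 0.

(* Homogeneous polynomials of degree d in y = (y_1..y_n), represented as
   finite linear combinations of products of d linear forms:
   P(y) = sum_t  t.1 * prod_(v in t.2) <y, v>.  Every homogeneous polynomial
   of degree d has such a representation (monomials are products of
   coordinate forms). *)
Definition hpoly (d : nat) := seq (C * d.-tuple 'cV[C]_n).

Definition hpoly_eval d (P : hpoly d) (y : 'rV[C]_n) : C :=
  \sum_(t <- P) t.1 * \prod_(v <- t.2) pair y v.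

(* (A^T P)(y) = P(y A^T); since <y A^T, v> = <y, A^T v>, this maps each
   linear factor v to A^T v. *)
Definition hpolyT d (A : 'M[C]_n) (P : hpoly d) : hpoly d :=
  [seq (t.1, map_tuple (fun v => A^T *m v) t.2) | t <- P].

(* Rational functions of the form  sum c * prod_j <x, sigma_j>^(-k_j),
   represented by the list of pairs (c, k). *)
Definition ratf := seq (C * ('I_n -> nat)).

Definition ratf_eval (sigma : 'M[C]_n) (e : ratf) (x : 'rV[C]_n) : C :=
  \sum_(t <- e) t.1 * \prod_(j < n) (pair x (col j sigma)) ^- (t.2 j).

(* The operator -D_v, with D_v = sum_i v_i d/dx_i the directional derivative,
   computed by the power/Leibniz rule:
   -D_v (<x,sigma_j>^(-k)) = k <v,sigma_j> <x,sigma_j>^(-k-1),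
   where <v, sigma_j> = sum_i v_i sigma_ij = d/dv of <x, sigma_j>. *)
Definition negD (sigma : 'M[C]_n) (v : 'cV[C]_n) (e : ratf) : ratf :=
  flatten [seq [seq ((t.2 j)%:R * t.1 * (v^T *m col j sigma) 0 0,
                     fun i => (t.2 i + (i == j))%N) | j <- enum 'I_n] | t <- e].

Definition applyOp (sigma : 'M[C]_n) (vs : seq 'cV[C]_n) (e : ratf) : ratf :=
  foldr (negD sigma) e vs.

(* f(sigma)(P, x) = P(-d_1, ..., -d_n) [ det sigma / prod_j <x, sigma_j> ],
   computed where all <x, sigma_j> <> 0, and 0 elsewhere. *)
Definition fP d (sigma : 'M[C]_n) (P : hpoly d) (x : 'rV[C]_n) : C :=
  if [forall j : 'I_n, pair x (col j sigma) != 0] then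
    \sum_(t <- P) t.1 *
       ratf_eval sigma (applyOp sigma t.2 [:: (\det sigma, fun _ => 1%N)]) x
  else 0.

Definition firstcol (A : 'M[C]_n) (x : 'rV[C]_n) : 'cV[C]_n :=
  head 0 [seq col j A | j <- enum 'I_n & pair x (col j A) != 0].

Definition psi_sigma (As : 'I_n -> 'M[C]_n) (x : 'rV[C]_n) : 'M[C]_n :=
  \matrix_(i, k) firstcol (As k) x i 0.

Definition psi d (As : 'I_n -> 'M[C]_n) (P : hpoly d) (x : 'rV[C]_n) : C :=
  if x == 0 then 0 else fP (psi_sigma As x) P x.

End Defs.

(* Main.v *)
Require Import Defs.
From HB Require Import structures.
From mathcomp Require Import all_boot all_order all_algebra.
From mathcomp Require Import mpoly.
From mathcomp Require Import ring.
Set Implicit Arguments. Unset Strict Implicit. Unset Printing Implicit Defensive.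
Import Order.TTheory GRing.Theory Num.Theory.
Local Open Scope ring_scope.








Section P2a.
Variables (C : numClosedFieldType) (N : nat).
Local Notation MP := {mpoly C[N]}.

Definition Dop (a : 'I_N -> C) (p : MP) : MP :=
  \sum_(l < N) (a l)%:MP * 'X_l ^+ 2 * mderiv l p.

Lemma DopD a p q : Dop a (p + q) = Dop a p + Dop a q.
Proof. by rewrite /Dop -big_split; apply: eq_bigr => l _; rewrite mderivD mulrDr. Qed.

Lemma Dop0 a : Dop a 0 = 0.
Proof. by rewrite /Dop big1 // => l _; rewrite mderiv0 mulr0. Qed.

Lemma DopC a c p : Dop a (c%:MP * p) = c%:MP * Dop a p.
Proof.
rewrite /Dop mulr_sumr; apply: eq_bigr => l _.
by rewrite mderiv_mulC; ring.
Qed.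

Lemma DopM a p q : Dop a (p * q) = Dop a p * q + p * Dop a q.
Proof.
rewrite /Dop mulr_suml mulr_sumr -big_split; apply: eq_bigr => l _ /=.
rewrite mderivM; ring.
Qed.

Lemma mderivXU (l m : 'I_N) : mderiv m ('X_l : MP) = (l == m)%:R.
Proof.
rewrite mderivX mnm1E; case: eqP => [->|_]; last by rewrite scale0r.
by rewrite -[X in (X - _)%MM]add0m addmK mpolyX0 scale1r.
Qed.

Lemma DopX a l : Dop a 'X_l = ((a l)%:MP * 'X_l) * 'X_l.
Proof.
rewrite /Dop (bigD1 l) //= big1 => [|m ml]; last by by rewrite mderivXU eq_sym (negbTE ml) mulr0.
by rewrite mderivXU eqxx mulr1 addr0 expr2 mulrA.
Qed.

Lemma Dop_log a (I : Type) (s : seq I) (F G : I -> MP) :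
  (forall i, Dop a (F i) = G i * F i) ->
  Dop a (\prod_(i <- s) F i) = (\sum_(i <- s) G i) * \prod_(i <- s) F i.
Proof.
move=> h; elim: s => [|i s ih].
  rewrite !big_nil mul0r -mpolyC1 -[X in Dop _ X]mulr1 DopC.
  by rewrite /Dop big1 ?mulr0 // => l _; rewrite -mpolyC1 mderivC mulr0.
rewrite !big_cons DopM ih h; ring.
Qed.

Lemma DopXn a l k : Dop a ('X_l ^+ k) = ((k%:R * a l)%:MP * 'X_l) * 'X_l ^+ k.
Proof.
elim: k => [|k ih].
  rewrite expr0 -mpolyC1 -[X in Dop _ X]mulr1 DopC.
  by rewrite /Dop big1 ?mulr0 ?mul0r ?mpolyC0 ?mulr0 // => m _; rewrite -mpolyC1 mderivC mulr0.
rewrite exprS DopM ih DopX !mpolyCM -natr1 mpolyCD mpolyC_nat mpolyC1.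
ring.
Qed.
End P2a.

Section P2b.
Variables (C : numClosedFieldType) (n : nat).
Local Notation MP := {mpoly C[n.+1]}.

Definition mono (i : 'I_n.+1) (k : 'I_n -> nat) : MP :=
  \prod_(j < n) 'X_(lift i j) ^+ k j.

Lemma Dop_mono a i k : Dop a (mono i k) =
  (\sum_(j < n) ((k j)%:R * a (lift i j))%:MP * 'X_(lift i j)) * mono i k.
Proof. by apply: Dop_log => j; rewrite DopXn. Qed.

Lemma mono_shift i k j :
  mono i (fun l => (k l + (l == j))%N) = 'X_(lift i j) * mono i k.
Proof.
rewrite /mono (bigD1 j) //= [in RHS](bigD1 j) //= eqxx addn1 exprS -mulrA; congr (_ * _).
congr (_ * _); apply: eq_bigr => l lj; by rewrite (negbTE lj) addn0.
Qed.

Definition poly_of i (e : ratf C n) : MP := \sum_(t <- e) t.1%:MP * mono i t.2.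

Lemma Dop_sum a (I : Type) (s : seq I) (F : I -> MP) :
  Dop a (\sum_(x <- s) F x) = \sum_(x <- s) Dop a (F x).
Proof. exact: (big_morph (Dop a) (DopD a) (Dop0 a)). Qed.

Lemma poly_of_negD (sigma : 'M[C]_n) (w : 'cV[C]_n) (e : ratf C n) (a : 'I_n.+1 -> C) (i : 'I_n.+1) :
  (forall j, (w^T *m col j sigma) 0 0 = a (lift i j)) ->
  poly_of i (negD sigma w e) = Dop a (poly_of i e).
Proof.
move=> ha; rewrite /poly_of /negD big_flatten big_map Dop_sum; apply: eq_bigr => t _.
rewrite big_map DopC Dop_mono enumT mulr_suml mulr_sumr; apply: eq_bigr => j _.
by rewrite mono_shift ha !mpolyCM mpolyC_nat; ring.
Qed.

Lemma ratf_eval_poly (sigma : 'M[C]_n) (e : ratf C n) (x : 'rV[C]_n) (i : 'I_n.+1) (y : 'I_n.+1 -> C) :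
  (forall j, pair x (col j sigma) = y (lift i j)) ->
  ratf_eval sigma e x = (poly_of i e).@[fun l => (y l)^-1].
Proof.
move=> hy; rewrite /ratf_eval /poly_of raddf_sum; apply: eq_bigr => t _.
rewrite /= mevalM mevalC /mono rmorph_prod; congr (_ * _); apply: eq_bigr => j _.
by rewrite rmorphXn /= mevalXU hy exprVn.
Qed.
End P2b.
Section P2c.
Variables (C : numClosedFieldType) (n : nat).
Local Notation MP := {mpoly C[n.+1]}.
Variable v : 'I_n.+1 -> 'cV[C]_n.

Definition aw (w : 'cV[C]_n) : 'I_n.+1 -> C := fun l => (w^T *m v l) 0 0.
Definition sig (i : 'I_n.+1) : 'M[C]_n := \matrix_(r, k) v (lift i k) r 0.

Lemma col_sig i j : col j (sig i) = v (lift i j).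
Proof. by apply/matrixP => r q; rewrite !mxE ord1. Qed.

Definition Op (vs : seq 'cV[C]_n) (p : MP) : MP := foldr (fun w => Dop (aw w)) p vs.

Lemma poly_of_applyOp i vs (e : ratf C n) :
  poly_of i (applyOp (sig i) vs e) = Op vs (poly_of i e).
Proof.
elim: vs => //= w vs <-; apply: poly_of_negD => j.
by rewrite col_sig.
Qed.

Lemma OpD vs p q : Op vs (p + q) = Op vs p + Op vs q.
Proof. by elim: vs => //= w vs ->; rewrite DopD. Qed.
Lemma Op0 vs : Op vs 0 = 0.
Proof. by elim: vs => //= w vs ->; rewrite Dop0. Qed.
Lemma OpC vs c p : Op vs (c%:MP * p) = c%:MP * Op vs p.
Proof. by elim: vs => //= w vs ->; rewrite DopC. Qed.
Lemma Op_sum vs (I : Type) (s : seq I) (F : I -> MP) :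
  Op vs (\sum_(x <- s) F x) = \sum_(x <- s) Op vs (F x).
Proof. exact: (big_morph (Op vs) (OpD vs) (Op0 vs)). Qed.

Definition Mi (i : 'I_n.+1) : MP := \prod_(j < n) 'X_(lift i j).
Definition Pi : MP := \prod_(l < n.+1) 'X_l.

Lemma XMi i : 'X_i * Mi i = Pi.
Proof. by rewrite /Pi (bigD1_ord i). Qed.

Definition S (a : 'I_n.+1 -> C) : MP := \sum_(l < n.+1) (a l)%:MP * 'X_l.

Lemma Dop_Mi a i : Dop a (Mi i) = (S a - (a i)%:MP * 'X_i) * Mi i.
Proof.
rewrite /Mi (@Dop_log _ _ _ _ _ _ (fun j => (a (lift i j))%:MP * 'X_(lift i j))); last by move=> j; rewrite DopX.
by rewrite /S (bigD1_ord i) //= addrC addrK.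
Qed.

Definition Lmp (c : 'I_n.+1 -> C) : MP := \sum_i (c i)%:MP * Mi i.

Lemma Dop_L c a : \sum_i c i * a i = 0 -> Dop a (Lmp c) = S a * Lmp c.
Proof.
move=> h; rewrite /Lmp Dop_sum.
rewrite (eq_bigr (fun i => S a * ((c i)%:MP * Mi i) - (c i * a i)%:MP * Pi)); last first.
  by move=> i _; rewrite DopC Dop_Mi -(XMi i) mpolyCM; ring.
by rewrite sumrB -mulr_sumr -mulr_suml -rmorph_sum /= h mpolyC0 mul0r subr0.
Qed.

Lemma Op_L c : (forall w, \sum_i c i * aw w i = 0) ->
  forall vs, exists Q, Op vs (Lmp c) = Lmp c * Q.
Proof.
move=> h; elim => [|w vs [Q ih]] /=; first by exists 1; rewrite mulr1.
exists (S (aw w) * Q + Dop (aw w) Q).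
by rewrite ih DopM Dop_L // mulrDr; congr (_ + _); ring.
Qed.

Lemma eval_L c (y : 'I_n.+1 -> C) : (forall l, y l != 0) -> \sum_i c i * y i = 0 ->
  (Lmp c).@[fun l => (y l)^-1] = 0.
Proof.
move=> ny h; rewrite /Lmp raddf_sum /=.
rewrite (eq_bigr (fun i => (c i * y i) * \prod_(l < n.+1) (y l)^-1)); last first.
  move=> i _; rewrite mevalM mevalC /Mi rmorph_prod /= (bigD1_ord i) //= mulrA -[c i * y i * _]mulrA.
  rewrite mulfV // mulr1; congr (_ * _); apply: eq_bigr => j _; by rewrite mevalXU.
by rewrite -mulr_suml h mul0r.
Qed.

Definition csig (i : 'I_n.+1) : C := (-1) ^+ i * \det (sig i).

Lemma cramer : \sum_i csig i *: v i = 0.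
Proof.
apply/matrixP => r q; rewrite ord1 summxE mxE.
pose B : 'M[C]_n.+1 := \matrix_(p, q) v q (if unlift ord0 p is Some r' then r' else r) 0.
have dB : \det B = 0.
  apply: (@determinant_alternate _ _ _ ord0 (lift ord0 r)); first by rewrite neq_lift.
  by move=> q'; rewrite !mxE unlift_none liftK.
rewrite -[RHS]dB (expand_det_row B ord0); apply: eq_bigr => j _.
rewrite !mxE unlift_none /cofactor /csig add0n mulrC; congr (_ * (_ * \det _)).
apply/matrixP => p k; rewrite !mxE liftK //.
Qed.

Lemma cramer_lin (u : 'rV[C]_n) : \sum_i csig i * (u *m v i) 0 0 = 0.
Proof.
rewrite -[RHS](_ : (u *m (\sum_i csig i *: v i)) 0 0 = 0); last by rewrite cramer mulmx0 mxE.
rewrite mulmx_sumr summxE; apply: eq_bigr => i _; by rewrite -scalemxAr [RHS]mxE.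
Qed.

Lemma key (x : 'rV[C]_n) (vs : seq 'cV[C]_n) : (forall l, pair x (v l) != 0) ->
  \sum_(i < n.+1) (-1) ^+ i * ratf_eval (sig i) (applyOp (sig i) vs [:: (\det (sig i), fun _ => 1%N)]) x = 0.
Proof.
move=> nz.
have [Q hQ] := Op_L (fun w => cramer_lin w^T) vs.
have ev := eval_L nz (cramer_lin x).
rewrite (eq_bigr (fun i => (Op vs ((csig i)%:MP * Mi i)).@[fun l => (pair x (v l))^-1])); last first.
  move=> i _; rewrite (@ratf_eval_poly _ _ _ _ _ i (fun l => pair x (v l))); last first.
    by move=> j; rewrite col_sig.
  rewrite poly_of_applyOp /poly_of big_seq1 /= OpC mevalM mevalC OpC mevalM mevalC /csig mulrA.
  congr (_ * _); congr (Op _ _).@[_]; by rewrite /mono /Mi; apply: eq_bigr => j _; rewrite expr1.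
by rewrite -raddf_sum /= -Op_sum hQ mevalM ev mul0r.
Qed.
End P2c.

Section P1.
Variables (C : numClosedFieldType) (n : nat).
Implicit Types (A B sigma : 'M[C]_n) (x : 'rV[C]_n) (v : 'cV[C]_n).

Lemma pairA x A v : pair x (A *m v) = pair (x *m A) v.
Proof. by rewrite /pair mulmxA. Qed.

Lemma col_mulmx A B j : col j (A *m B) = A *m col j B.
Proof. by rewrite !colE mulmxA. Qed.

Lemma head_map0 (f : 'cV[C]_n -> 'cV[C]_n) s : f 0 = 0 -> head 0 (map f s) = f (head 0 s).
Proof. by case: s => //= ->. Qed.

Lemma firstcolM A B x : firstcol (A *m B) x = A *m firstcol B (x *m A).
Proof.
rewrite /firstcol -head_map0 ?mulmx0 //; congr head.
rewrite -map_comp; rewrite (eq_filter (a2 := fun j => pair (x *m A) (col j B) != 0)); last first.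
  by move=> j; rewrite col_mulmx pairA.
by apply: eq_map => j /=; rewrite col_mulmx.
Qed.

Lemma psi_sigmaM A (As : 'I_n -> 'M[C]_n) x :
  psi_sigma (fun k => A *m As k) x = A *m psi_sigma As (x *m A).
Proof.
apply/matrixP => i k; rewrite !mxE firstcolM mxE; apply: eq_bigr => l _.
by rewrite mxE.
Qed.

Definition rscale (c : C) (e : ratf C n) : ratf C n := [seq (c * t.1, t.2) | t <- e].

Lemma negD_scale sigma v c e : negD sigma v (rscale c e) = rscale c (negD sigma v e).
Proof.
rewrite /negD /rscale map_flatten -map_comp; congr flatten.
rewrite -map_comp; apply: eq_map => t /=; rewrite -map_comp; apply: eq_map => j /=.
by congr (_, _); rewrite mulrCA !mulrA.
Qed.

Lemma applyOp_scale sigma vs c e : applyOp sigma vs (rscale c e) = rscale c (applyOp sigma vs e).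
Proof. by elim: vs => //= w vs ->; rewrite negD_scale. Qed.

Lemma ratf_eval_scale sigma c e x : ratf_eval sigma (rscale c e) x = c * ratf_eval sigma e x.
Proof. by rewrite /ratf_eval big_map big_distrr; apply: eq_bigr => t _ /=; rewrite mulrA. Qed.

Lemma negDM A sigma v e : negD (A *m sigma) v e = negD sigma (A^T *m v) e.
Proof.
rewrite /negD; congr flatten; apply: eq_map => t; apply: eq_map => j.
by rewrite col_mulmx trmx_mul trmxK mulmxA.
Qed.

Lemma applyOpM A sigma vs e : applyOp (A *m sigma) vs e = applyOp sigma (map (fun v => A^T *m v) vs) e.
Proof. by elim: vs => //= w vs ->; rewrite negDM. Qed.

Lemma ratf_evalM A sigma e x : ratf_eval (A *m sigma) e x = ratf_eval sigma e (x *m A).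
Proof.
rewrite /ratf_eval; apply: eq_bigr => t _; congr (_ * _); apply: eq_bigr => j _.
by rewrite col_mulmx pairA.
Qed.

Lemma fPM d A sigma (P : hpoly C n d) x :
  fP (A *m sigma) P x = \det A * fP sigma (hpolyT A P) (x *m A).
Proof.
rewrite /fP (eq_forallb (fun j => _ : _ = (pair (x *m A) (col j sigma) != 0))); last first.
  by move=> j; rewrite col_mulmx pairA.
case: ifP => _; last by rewrite mulr0.
rewrite /hpolyT big_map big_distrr; apply: eq_bigr => t _ /=.
rewrite ratf_evalM applyOpM det_mulmx.
have -> : [:: (\det A * \det sigma, fun _ : 'I_n => 1%N)] = rscale (\det A) [:: (\det sigma, fun _ => 1%N)] by [].
by rewrite applyOp_scale ratf_eval_scale mulrCA.
Qed.

Lemma part1 d A (As : 'I_n -> 'M[C]_n) : A \in unitmx ->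
  forall (P : hpoly C n d) x,
    psi (fun k => A *m As k) P x = \det A * psi As (hpolyT A P) (x *m A).
Proof.
move=> uA P x; rewrite /psi.
have -> : (x *m A == 0) = (x == 0).
  apply/eqP/eqP => [h|->]; last by rewrite mul0mx.
  by rewrite -(mulmxK uA x) h mul0mx.
case: eqP => _; first by rewrite mulr0.
by rewrite psi_sigmaM fPM.
Qed.
End P1.

Lemma firstcol_nz (C : numClosedFieldType) (n : nat) (A : 'M[C]_n) (x : 'rV[C]_n) :
  A \in unitmx -> x != 0 -> pair x (firstcol A x) != 0.
Proof.
move=> uA nx.
have [j hj] : exists j, pair x (col j A) != 0.
  apply/existsP; apply: contraR nx; rewrite negb_exists => /forallP h.
  apply/eqP; rewrite -(mulmxK uA x); apply/eqP.
  have -> : x *m A = 0.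
    apply/matrixP => r k; rewrite ord1 [RHS]mxE.
    have := h k; rewrite negbK /pair colE mulmxA -colE => /eqP <-; by rewrite [RHS]mxE.
  by apply/eqP; apply: mul0mx.
rewrite /firstcol; case E: [seq j <- enum 'I_n | pair x (col j A) != 0] => [|j0 s] /=.
  have : j \in [seq j <- enum 'I_n | pair x (col j A) != 0] by rewrite mem_filter hj mem_enum.
  by rewrite E.
have : j0 \in [seq j <- enum 'I_n | pair x (col j A) != 0] by rewrite E mem_head.
by rewrite mem_filter => /andP[].
Qed.

Theorem mainTheorem2 (C : numClosedFieldType) (n d : nat) :
  (forall (A : 'M[C]_n) (As : 'I_n -> 'M[C]_n),
      A \in unitmx -> (forall k, As k \in unitmx) ->
      forall (P : hpoly C n d) (x : 'rV[C]_n),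
        psi (fun k => A *m As k) P x = \det A * psi As (hpolyT A P) (x *m A))
  /\
  (forall As : 'I_n.+1 -> 'M[C]_n,
      (forall k, As k \in unitmx) ->
      forall (P : hpoly C n d) (x : 'rV[C]_n),
        \sum_(i < n.+1) (-1) ^+ i * psi (fun k : 'I_n => As (lift i k)) P x = 0).
Proof.
split.
  by move=> A As uA _ P x; apply: part1.
move=> As uAs P x.
case: (eqVneq x 0) => [x0|nx].
  by rewrite big1 // => i _; rewrite /psi x0 eqxx mulr0.
pose v l := firstcol (As l) x.
have nz : forall l, pair x (v l) != 0 by move=> l; apply: firstcol_nz.
have E : forall i : 'I_n.+1, psi (fun k : 'I_n => As (lift i k)) P x =
   \sum_(t <- P) t.1 * ratf_eval (sig v i) (applyOp (sig v i) t.2 [:: (\det (sig v i), fun _ => 1%N)]) x.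
  move=> i; rewrite /psi (negbTE nx) /fP.
  have -> : psi_sigma (fun k : 'I_n => As (lift i k)) x = sig v i by [].
  rewrite (_ : [forall j, _] = true) //; apply/forallP => j; by rewrite col_sig.
rewrite (eq_bigr (fun i : 'I_n.+1 => \sum_(t <- P) t.1 * ((-1) ^+ i * ratf_eval (sig v i) (applyOp (sig v i) t.2 [:: (\det (sig v i), fun _ => 1%N)]) x))); last first.
  by move=> i _; rewrite E mulr_sumr; apply: eq_bigr => t _; rewrite mulrCA.
rewrite exchange_big big1 // => t _; by rewrite -mulr_sumr key // mulr0.
Qed.
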